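(* For every $z_j\in Z_\theta$ and every $t=0,1,\dots,T-2$, $\bar\omega_t(z_j)\le U^\omega_t(z_j)\le\bar U^\omega_t(\theta)$, where, with $\mu_t(0)=z_j$ and $\mu_t(i)=\max(\mu_t(i-1),S^U_{t+i-1})+\theta$ for $i=1,\dots,T-2-t$, $$U^\omega_t(z_j)=\theta\sum_{i=0}^{T-2-t}\alpha^i\gamma_{t+i}+\theta\sum_{i=0}^{T-2-t}\sum_{n=1}^{T-1-t-i}\alpha^{n+i}\gamma_{t+i+n}\Big[\prod_{m=0}^{n-1}F_{t+i+m}\big(S^U_{t+i}+(m+1)\theta-s_{t+i+m+1}\big)+\prod_{m=0}^{n-1}F_{t+i+m}\big(\max(\mu_t(i),S^U_{t+i})+(m+1)\theta-s_{t+i+m+1}\big)\Big],$$ $$\bar U^\omega_t(\theta)=\theta\sum_{i=0}^{T-2-t}\alpha^i\gamma_{t+i}+2\theta\sum_{i=0}^{T-2-t}\sum_{n=1}^{T-1-t-i}\alpha^{n+i}\gamma_{t+i+n}.$$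
   Context: Model. Fix an integer horizon $T\ge 2$, a discount factor $\alpha\in(0,1]$, and for $t=0,\dots,T-1$: unit ordering costs $c_t\in\mathbb R$, a salvage coefficient $c_T\in\mathbb R$, setup costs $K_t\ge 0$, functions $G_t:\mathbb R\to\mathbb R$, and independent nonnegative random demands $D_0,\dots,D_{T-1}$ with right-continuous distribution functions $F_t$ and finite means; all expectations appearing are assumed finite. Put $C_t(y)=(c_t-\alpha c_{t+1})y+G_t(y)+\alpha c_{t+1}E[D_t]$. Standing assumptions: (i) each $C_t$ is convex with $C_t(y)\to+\infty$ as $|y|\to\infty$; (ii) $K_t\ge \alpha K_{t+1}$ for $t=0,\dots,T-2$; (iii) there are constants $\gamma_t\ge 0$ with $|C_t(x)-C_t(y)|\le\gamma_t|x-y|$ for all $x,y$. Grid construction. Fix $\theta>0$, $z_m=m\theta$, $Z_\theta=\{z_m:m\in\mathbb Z\}$, $f_t(n)=F_t(z_{n+1})-F_t(z_n)$ ($n\ge -1$). $C^m_t=\min\{y: C_t(y)=\min_x C_t(x)\}$; with $z_{n_0}<C^m_t\le z_{n_0+1}$, $S^U_t=\min\{z_m\in Z_\theta: z_m\ge C^m_t,\ C_t(z_m)>C_t(z_{n_0})+K_t\}$. $s_{T-1}$ is a point with $s_{T-1}\le C^m_{T-1}$, $C_{T-1}(s_{T-1})=C_{T-1}(C^m_{T-1})+K_{T-1}$; $\bar I_{T-1}=s_{T-1}$. For $t=T-2,\dots,0$: $I_t=\max\{z_m\in Z_\theta: z_m<\min(\bar I_{t+1}-\theta,C^m_t)\}$,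 $\bar I_t=\max\{z_m\in Z_\theta: z_m\le I_t,\ C_t(z_m)>C_t(I_t)+K_t\}+\theta$. $H_{T-1}=C_{T-1}$, $S_{T-1}=C^m_{T-1}$; $V_t(y)=H_t(S_t)+K_t$ for $y<s_t$, $V_t(y)=H_t(y)$ for $y\ge s_t$. For $t=T-2,\dots,0$: $H_t(y)=C_t(y)+\alpha\sum_{n=-1}^\infty V_{t+1}(y-z_n)f_t(n)$; $S_t=\max\{z_m\in Z_\theta: I_t\le z_m\le S^U_t,\ H_t(z_m)=\min\{H_t(z_n):z_n\in Z_\theta, I_t\le z_n\le S^U_t\}\}$; $s_t=S_t$ if $K_t=0$, else $s_t=\min\{z_m\in Z_\theta:\bar I_t\le z_m\le S_t,\ H_t(z_m)\le H_t(S_t)+K_t\}$. Estimate functions. $\psi_{T-1}(x,y)=\bar\psi_{T-1}(x,y)=\gamma_{T-1}x$; $\varphi_{T-1}(x,y)=\bar\varphi_{T-1}(x,y)=0$ if $y<s_{T-1}$ and $=\gamma_{T-1}x$ if $y\ge s_{T-1}$. For $t=0,\dots,T-2$, with $n$ the integer such that $z_{n-1}\le y-s_{t+1}<z_n$: $\psi_t(x,y)=\gamma_tx$ if $y<s_{t+1}-\theta$, else $\psi_t(x,y)=\gamma_tx+\alpha\sum_{m=-1}^{n-1}\varphi_{t+1}(x,y-z_m)f_t(m)$; $\varphi_t(x,y)=0$ if $y<s_t$, $=\psi_t(y-s_t,y)$ if $y\ge s_t$ and $y-x<s_t$, $=\psi_t(x,y)$ if $y\ge s_t$ and $y-x\ge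 s_t$. Likewise $\bar\psi_t(x,y)=\gamma_tx$ if $y<s_{t+1}-\theta$, else $\bar\psi_t(x,y)=\gamma_tx+\alpha\sum_{m=-1}^{n-1}\bar\varphi_{t+1}(x,y-z_m)f_t(m)$; $\bar\varphi_t(x,y)=0$ if $y<s_t$, $=\bar\psi_t(y-s_t+\theta,y)$ if $y\ge s_t$ and $y-x<s_t$, $=\bar\psi_t(x,y)$ if $y\ge s_t$ and $y-x\ge s_t$. Error-bound functions. $\omega_{T-1}\equiv\bar\omega_{T-1}\equiv 0$, $\eta_{T-1}=0$. For $t=T-2,\dots,0$: $\omega_t(x)=\psi_t(\theta,x)-\gamma_t\theta+\alpha\sum_{n=-1}^\infty\bar\omega_{t+1}(x-z_n)f_t(n)$; $\eta_t=\bar\psi_t(\theta,S^U_t)+\omega_t(S^U_t)$; $\bar\omega_t(x)=\eta_t$ if $x\le S^U_t$ and $\bar\omega_t(x)=\max(\eta_t,\omega_t(x))$ if $x>S^U_t$. *)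

(* Defs.v *)
From Stdlib Require Import Reals ZArith List ClassicalEpsilon.
From Coquelicot Require Import Coquelicot.
Open Scope R_scope.

Record model := Model {
  hor : nat;
  alp : R;                (* discount factor alpha *)
  cc  : nat -> R;         (* c_t, t = 0..T (c_T salvage) *)
  KK  : nat -> R;         (* setup costs K_t *)
  GG  : nat -> R -> R;
  FF  : nat -> R -> R;    (* distribution function F_t of D_t *)
  ED  : nat -> R;         (* E[D_t] *)
  gam : nat -> R;         (* Lipschitz constants gamma_t *)
  th  : R                 (* grid step theta *)
}.

(** finite sums / products over lo <= i <= hi (empty if hi < lo) *)
Definition sumR (lo hi : nat) (g : nat -> R) : R :=
  fold_right Rplus 0 (map g (seq lo (S hi - lo))).
Definition prodR (lo hi : nat) (g : nat -> R) : R :=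
  fold_right Rmult 1 (map g (seq lo (S hi - lo))).

(** least / greatest element of a set of reals (chosen by epsilon;
    it is the unique such element whenever one exists). *)
Definition Rleast (A : R -> Prop) : R :=
  epsilon (inhabits 0) (fun x => A x /\ forall y, A y -> x <= y).
Definition Rgreatest (A : R -> Prop) : R :=
  epsilon (inhabits 0) (fun x => A x /\ forall y, A y -> y <= x).

Definition nonneg_cdf (F : R -> R) : Prop :=
  (forall x y, x <= y -> F x <= F y) /\
  (forall x, filterlim F (at_right x) (locally (F x))) /\
  (forall x, x < 0 -> F x = 0) /\
  filterlim F (Rbar_locally p_infty) (locally 1).

Definition convexR (f : R -> R) : Prop :=
  forall x y l, 0 <= l <= 1 -> f (l * x + (1 - l) * y) <= l * f x + (1 - l) * f y.


Definition Ct (p : model) (t : nat) (y : R) : R :=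
  (cc p t - alp p * cc p (S t)) * y + GG p t y + alp p * cc p (S t) * ED p t.

Definition zz (p : model) (m : Z) : R := IZR m * th p.
Definition ongrid (p : model) (x : R) : Prop := exists m : Z, x = zz p m.
Definition fprob (p : model) (t : nat) (n : Z) : R :=
  FF p t (zz p (n + 1)) - FF p t (zz p n).
Definition Esum (p : model) (t : nat) (g : R -> R) : R :=
  Series (fun j : nat => g (zz p (Z.of_nat j - 1)) * fprob p t (Z.of_nat j - 1)).

Definition Cm (p : model) (t : nat) : R :=
  Rleast (fun y => forall x, Ct p t y <= Ct p t x).
Definition zn0 (p : model) (t : nat) : R :=
  Rgreatest (fun z => ongrid p z /\ z < Cm p t).
Definition SU (p : model) (t : nat) : R :=
  Rleast (fun z => ongrid p z /\ Cm p t <= z /\ Ct p t z > Ct p t (zn0 p t) + KK p t).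
Definition sLast (p : model) : R :=
  let t := (hor p - 1)%nat in
  epsilon (inhabits 0) (fun y => y <= Cm p t /\ Ct p t y = Ct p t (Cm p t) + KK p t).

(** The backward recursion: data (Ibar_t, S_t, s_t, H_t) at stage t. *)
Record stage := Stage { sIb : R; sS : R; ss : R; sH : R -> R }.

Definition Vof (p : model) (t : nat) (st : stage) (y : R) : R :=
  if Rlt_dec y (ss st) then sH st (sS st) + KK p t else sH st y.

(** stg p k = data at stage t = T-1-k *)
Fixpoint stg (p : model) (k : nat) : stage :=
  match k with
  | O => let t := (hor p - 1)%nat in Stage (sLast p) (Cm p t) (sLast p) (Ct p t)
  | S k' =>
    let t := (hor p - 1 - S k')%nat in
    let nx := stg p k' in
    let I := Rgreatest (fun z => ongrid p z /\ z < Rmin (sIb nx - th p) (Cm p t)) in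
    let Ib := Rgreatest (fun z => ongrid p z /\ z <= I /\ Ct p t z > Ct p t I + KK p t)
              + th p in
    let H := fun y => Ct p t y + alp p * Esum p t (fun z => Vof p (S t) nx (y - z)) in
    let S0 := Rgreatest (fun z => ongrid p z /\ I <= z <= SU p t /\
                 forall w, ongrid p w -> I <= w <= SU p t -> H z <= H w) in
    let s := if Req_EM_T (KK p t) 0 then S0
             else Rleast (fun z => ongrid p z /\ Ib <= z <= S0 /\ H z <= H S0 + KK p t) in
    Stage Ib S0 s H
  end.

Definition s_ (p : model) (t : nat) : R := ss (stg p (hor p - 1 - t)).

(** the integer n with z_{n-1} <= y - s_{t+1} < z_n *)
Definition nidx (p : model) (t : nat) (y : R) : Z :=
  (Int_part ((y - s_ p (S t)) / th p) + 1)%Z.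

(** (psi_t, phi_t) for t = T-1-k; bar = true gives (psibar_t, phibar_t). *)
Fixpoint psiphi (p : model) (bar : bool) (k : nat) : (R -> R -> R) * (R -> R -> R) :=
  match k with
  | O => let t := (hor p - 1)%nat in
         (fun x _ => gam p t * x,
          fun x y => if Rlt_dec y (s_ p t) then 0 else gam p t * x)
  | S k' =>
    let t := (hor p - 1 - S k')%nat in
    let phn := snd (psiphi p bar k') in
    let ps := fun x y =>
      if Rlt_dec y (s_ p (S t) - th p) then gam p t * x
      else gam p t * x + alp p *
        sumR 0 (Z.to_nat (nidx p t y))
          (fun j => phn x (y - zz p (Z.of_nat j - 1)) * fprob p t (Z.of_nat j - 1)) in
    (ps,
     fun x y => if Rlt_dec y (s_ p t) then 0
                else if Rlt_dec (y - x) (s_ p t)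
                     then ps (y - s_ p t + (if bar then th p else 0)) y
                     else ps x y)
  end.

Definition psiF (p : model) (t : nat) := fst (psiphi p false (hor p - 1 - t)).
Definition phiF (p : model) (t : nat) := snd (psiphi p false (hor p - 1 - t)).
Definition psibF (p : model) (t : nat) := fst (psiphi p true (hor p - 1 - t)).
Definition phibF (p : model) (t : nat) := snd (psiphi p true (hor p - 1 - t)).

(** (omega_t, eta_t, omegabar_t) for t = T-1-k *)
Fixpoint omk (p : model) (k : nat) : (R -> R) * R * (R -> R) :=
  match k with
  | O => (fun _ => 0, 0, fun _ => 0)
  | S k' =>
    let t := (hor p - 1 - S k')%nat in
    let obn := snd (omk p k') in
    let w := fun x => psiF p t (th p) x - gam p t * th p
                      + alp p * Esum p t (fun z => obn (x - z)) in
    let eta := psibF p t (th p) (SU p t) + w (SU p t) in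
    (w, eta, fun x => if Rle_dec x (SU p t) then eta else Rmax eta (w x))
  end.

Definition omegaF (p : model) (t : nat) := fst (fst (omk p (hor p - 1 - t))).
Definition etaF (p : model) (t : nat) := snd (fst (omk p (hor p - 1 - t))).
Definition omegabar (p : model) (t : nat) := snd (omk p (hor p - 1 - t)).

Fixpoint mu (p : model) (t : nat) (z : R) (i : nat) : R :=
  match i with
  | O => z
  | S i' => Rmax (mu p t z i') (SU p (t + i')) + th p
  end.

Definition Uomega (p : model) (t : nat) (z : R) : R :=
  let T := hor p in
  th p * sumR 0 (T - 2 - t) (fun i => alp p ^ i * gam p (t + i))
  + th p * sumR 0 (T - 2 - t) (fun i =>
      sumR 1 (T - 1 - t - i) (fun n =>
        alp p ^ (n + i) * gam p (t + i + n) *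
        ( prodR 0 (n - 1) (fun m =>
             FF p (t + i + m) (SU p (t + i) + INR (m + 1) * th p - s_ p (t + i + m + 1)))
        + prodR 0 (n - 1) (fun m =>
             FF p (t + i + m) (Rmax (mu p t z i) (SU p (t + i)) + INR (m + 1) * th p
                               - s_ p (t + i + m + 1)))))).

Definition Ubar (p : model) (t : nat) : R :=
  let T := hor p in
  th p * sumR 0 (T - 2 - t) (fun i => alp p ^ i * gam p (t + i))
  + 2 * th p * sumR 0 (T - 2 - t) (fun i =>
      sumR 1 (T - 1 - t - i) (fun n => alp p ^ (n + i) * gam p (t + i + n))).

Definition standing (p : model) : Prop :=
  (2 <= hor p)%nat /\ 0 < alp p <= 1 /\ 0 < th p /\
  (forall t, (t < hor p)%nat ->
     nonneg_cdf (FF p t) /\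
     (* finite mean: E[D_t] = int_0^oo (1 - F_t) *)
     is_RInt_gen (fun x => 1 - FF p t x) (at_point 0) (Rbar_locally p_infty) (ED p t)) /\
  (forall t, (t < hor p)%nat -> 0 <= KK p t) /\
  (forall t, (t < hor p)%nat ->
     convexR (Ct p t) /\ is_lim (Ct p t) p_infty p_infty /\ is_lim (Ct p t) m_infty p_infty) /\
  (forall t, (t <= hor p - 2)%nat -> alp p * KK p (S t) <= KK p t) /\
  (forall t, (t < hor p)%nat ->
     0 <= gam p t /\ forall x y, Rabs (Ct p t x - Ct p t y) <= gam p t * Rabs (x - y)).

(* Main.v *)
Require Import Defs.
From Stdlib Require Import Reals ZArith List Lia Lra Classical ClassicalEpsilon.
From Coquelicot Require Import Coquelicot.
Open Scope R_scope.

Lemma fold_plus_acc (l : list R) (a : R) : fold_right Rplus a l = fold_right Rplus 0 l + a.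
Proof. induction l; simpl; [ring| rewrite IHl; ring]. Qed.

Lemma sumR_empty lo g : sumR (S lo) lo g = 0.
Proof. unfold sumR. replace (S lo - S lo)%nat with 0%nat by lia. reflexivity. Qed.

Lemma sumR_front lo k g : sumR lo (lo + S k) g = g lo + sumR lo (lo + k) (fun i => g (S i)).
Proof.
  unfold sumR. replace (S (lo + S k) - lo)%nat with (S (S k)) by lia.
  replace (S (lo + k) - lo)%nat with (S k) by lia.
  simpl. f_equal. rewrite <- seq_shift, map_map. reflexivity.
Qed.

Lemma sumR_S0 k g : sumR 0 (S k) g = g 0%nat + sumR 0 k (fun i => g (S i)).
Proof. exact (sumR_front 0 k g). Qed.

Lemma sumR_S1 k g : sumR 1 (S k) g = g 1%nat + sumR 1 k (fun i => g (S i)).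
Proof.
  destruct k.
  - unfold sumR. simpl. ring.
  - exact (sumR_front 1 k g).
Qed.

Lemma sumR_00 g : sumR 0 0 g = g 0%nat.
Proof. unfold sumR. simpl. ring. Qed.

Lemma sumR_back k g : sumR 0 (S k) g = sumR 0 k g + g (S k).
Proof.
  unfold sumR. replace (S (S k) - 0)%nat with (S (S k)) by lia.
  replace (S k - 0)%nat with (S k) by lia.
  rewrite seq_S, map_app, fold_right_app. simpl. rewrite fold_plus_acc. ring.
Qed.

Lemma prodR_S0 k g : prodR 0 (S k) g = g 0%nat * prodR 0 k (fun i => g (S i)).
Proof.
  unfold prodR. replace (S (S k) - 0)%nat with (S (S k)) by lia.
  replace (S k - 0)%nat with (S k) by lia.
  simpl. f_equal. rewrite <- seq_shift, map_map. reflexivity.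
Qed.

Lemma prodR_00 g : prodR 0 0 g = g 0%nat.
Proof. unfold prodR. simpl. ring. Qed.

Lemma sumR_ext lo hi g h : (forall i, (lo <= i)%nat -> g i = h i) -> sumR lo hi g = sumR lo hi h.
Proof.
  intros H. unfold sumR. f_equal. apply map_ext_in. intros a Ha.
  apply in_seq in Ha. apply H. lia.
Qed.

Lemma prodR_ext lo hi g h : (forall i, g i = h i) -> prodR lo hi g = prodR lo hi h.
Proof. intros H. unfold prodR. f_equal. apply map_ext. auto. Qed.

Lemma sumR_plus lo hi g h : sumR lo hi (fun i => g i + h i) = sumR lo hi g + sumR lo hi h.
Proof. unfold sumR. induction (seq lo (S hi - lo)); simpl; [ring| rewrite IHl; ring]. Qed.

Lemma sumR_scal lo hi c g : sumR lo hi (fun i => c * g i) = c * sumR lo hi g.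
Proof. unfold sumR. induction (seq lo (S hi - lo)); simpl; [ring| rewrite IHl; ring]. Qed.

Lemma back_ind (P : nat -> Prop) (N : nat) :
  P N -> (forall t, (t < N)%nat -> P (S t) -> P t) -> forall t, (t <= N)%nat -> P t.
Proof.
  intros HN HS t Ht. remember (N - t)%nat as d. revert t Ht Heqd.
  induction d; intros t Ht Hd.
  - replace t with N by lia. exact HN.
  - apply HS. lia. apply IHd; lia.
Qed.
Lemma Zmax_ex (P : Z -> Prop) (B m0 : Z) :
  P m0 -> (forall m, P m -> (m <= B)%Z) -> exists m, P m /\ forall m', P m' -> (m' <= m)%Z.
Proof.
  intros H0 HB.
  assert (Hg : forall n : nat, forall m0, (B - m0 <= Z.of_nat n)%Z -> P m0 ->
     exists m, P m /\ forall m', P m' -> (m' <= m)%Z).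
  { induction n; intros m1 Hn Hm1.
    - exists m1. split; auto. intros m' Hm'. specialize (HB m' Hm'). lia.
    - destruct (classic (exists m', P m' /\ (m1 < m')%Z)) as [[m' [Hm' Hlt]]|Hno].
      + apply (IHn m'); auto. specialize (HB m' Hm'). lia.
      + exists m1. split; auto. intros m' Hm'. destruct (Z_lt_le_dec m1 m'); [|lia].
        exfalso; apply Hno; eauto. }
  apply (Hg (Z.to_nat (B - m0)) m0); auto. specialize (HB m0 H0). lia.
Qed.

Lemma Zmin_ex (P : Z -> Prop) (B m0 : Z) :
  P m0 -> (forall m, P m -> (B <= m)%Z) -> exists m, P m /\ forall m', P m' -> (m <= m')%Z.
Proof.
  intros H0 HB.
  destruct (Zmax_ex (fun m => P (- m)%Z) (- B) (- m0)) as [m [Hm Hmax]].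
  - rewrite Z.opp_involutive; auto.
  - intros m Hm. specialize (HB _ Hm). lia.
  - exists (- m)%Z. split; auto. intros m' Hm'. specialize (Hmax (- m')%Z).
    rewrite Z.opp_involutive in Hmax. specialize (Hmax Hm'). lia.
Qed.

Lemma Zargmin (h : Z -> R) (a b : Z) : (a <= b)%Z ->
  exists m, (a <= m <= b)%Z /\ forall m', (a <= m' <= b)%Z -> h m <= h m'.
Proof.
  intros Hab.
  assert (Hg : forall n : nat, forall b, (b - a = Z.of_nat n)%Z ->
    exists m, (a <= m <= b)%Z /\ forall m', (a <= m' <= b)%Z -> h m <= h m').
  { induction n; intros b1 Hb.
    - exists a. split; [lia|]. intros m' Hm'. replace m' with a by lia. lra.
    - destruct (IHn (b1 - 1)%Z) as [m [Hm Hmin]]; [lia|].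
      destruct (Rle_dec (h m) (h b1)).
      + exists m. split; [lia|]. intros m' Hm'.
        destruct (Z.eq_dec m' b1); [subst; auto|]. apply Hmin; lia.
      + exists b1. split; [lia|]. intros m' Hm'.
        destruct (Z.eq_dec m' b1); [subst; lra|]. specialize (Hmin m'). 
        assert (h m <= h m') by (apply Hmin; lia). lra. }
  apply (Hg (Z.to_nat (b - a))). lia.
Qed.

Section Grid.
Variable p : model.
Hypothesis Hth : 0 < th p.

Lemma zz_lt_iff a b : zz p a < zz p b <-> (a < b)%Z.
Proof.
  unfold zz. split; intros H.
  - apply lt_IZR. apply Rmult_lt_reg_r with (th p); auto.
  - apply Rmult_lt_compat_r; auto. apply IZR_lt; auto.
Qed.

Lemma zz_le_iff a b : zz p a <= zz p b <-> (a <= b)%Z.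
Proof.
  unfold zz. split; intros H.
  - apply le_IZR. apply Rmult_le_reg_r with (th p); auto.
  - apply Rmult_le_compat_r; [lra|]. apply IZR_le; auto.
Qed.

Lemma grid_step x y : ongrid p x -> ongrid p y -> x < y -> x + th p <= y.
Proof.
  intros [a ->] [b ->] H. apply zz_lt_iff in H.
  replace (zz p a + th p) with (zz p (a + 1)) by (unfold zz; rewrite plus_IZR; ring).
  apply zz_le_iff. lia.
Qed.

Lemma grid_above b : exists m, b < zz p m.
Proof.
  exists (up (b / th p)). unfold zz. destruct (archimed (b / th p)) as [H _].
  apply Rmult_lt_compat_r with (r := th p) in H; auto.
  unfold Rdiv in H. rewrite Rmult_assoc, Rinv_l, Rmult_1_r in H; lra.
Qed.

Lemma grid_below b : exists m, zz p m < b.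
Proof.
  destruct (grid_above (- b)) as [m Hm]. exists (- m)%Z. unfold zz in *.
  rewrite opp_IZR. lra.
Qed.

Lemma zz_bound_above b m : zz p m <= b -> (m <= up (b / th p))%Z.
Proof.
  intros H. destruct (archimed (b / th p)) as [H1 _].
  assert (IZR m <= b / th p).
  { unfold zz in H. apply Rmult_le_reg_r with (th p); auto. unfold Rdiv.
    rewrite Rmult_assoc, Rinv_l, Rmult_1_r; lra. }
  apply le_IZR. lra.
Qed.

Lemma Rgreatest_grid (A : R -> Prop) x0 b :
  (forall x, A x -> ongrid p x) -> A x0 -> (forall x, A x -> x <= b) ->
  A (Rgreatest A) /\ forall y, A y -> y <= Rgreatest A.
Proof.
  intros Hg H0 Hb. unfold Rgreatest. apply epsilon_spec.
  destruct (Hg _ H0) as [m0 Hm0].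
  destruct (Zmax_ex (fun m => A (zz p m)) (up (b / th p)) m0) as [m [Hm Hmax]].
  - subst; auto.
  - intros m Hm. apply zz_bound_above. auto.
  - exists (zz p m). split; auto. intros y Hy. destruct (Hg _ Hy) as [k ->].
    apply zz_le_iff. auto.
Qed.

Lemma Rleast_grid (A : R -> Prop) x0 b :
  (forall x, A x -> ongrid p x) -> A x0 -> (forall x, A x -> b <= x) ->
  A (Rleast A) /\ forall y, A y -> Rleast A <= y.
Proof.
  intros Hg H0 Hb. unfold Rleast. apply epsilon_spec.
  destruct (Hg _ H0) as [m0 Hm0].
  destruct (Zmin_ex (fun m => A (zz p m)) (- up (- b / th p)) m0) as [m [Hm Hmin]].
  - subst; auto.
  - intros m Hm. specialize (Hb _ Hm).
    assert (zz p (- m) <= - b) by (unfold zz in *; rewrite opp_IZR; lra).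
    apply zz_bound_above in H. lia.
  - exists (zz p m). split; auto. intros y Hy. destruct (Hg _ Hy) as [k ->].
    apply zz_le_iff. auto.
Qed.
End Grid.

Section Model.
Variable p : model.
Hypothesis Hp : standing p.
Notation T := (hor p).

Lemma th_pos : 0 < th p. Proof. destruct Hp as (_&_&H&_). exact H. Qed.
Lemma alp_pos : 0 < alp p. Proof. destruct Hp as (_&H&_). lra. Qed.
Lemma alp_le1 : alp p <= 1. Proof. destruct Hp as (_&H&_). lra. Qed.
Lemma T_ge2 : (2 <= T)%nat. Proof. destruct Hp as (H&_). exact H. Qed.
Lemma gam_nn t : (t < T)%nat -> 0 <= gam p t.
Proof. destruct Hp as (_&_&_&_&_&_&_&H). intros Ht. apply (H t Ht). Qed.
Lemma K_nn t : (t < T)%nat -> 0 <= KK p t.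
Proof. destruct Hp as (_&_&_&_&H&_). auto. Qed.
Lemma cdf t : (t < T)%nat -> nonneg_cdf (FF p t).
Proof. destruct Hp as (_&_&_&H&_). intros Ht. apply (H t Ht). Qed.
Lemma F_mono t x y : (t < T)%nat -> x <= y -> FF p t x <= FF p t y.
Proof. intros Ht. destruct (cdf t Ht) as (H&_). auto. Qed.
Lemma F_neg t x : (t < T)%nat -> x < 0 -> FF p t x = 0.
Proof. intros Ht. destruct (cdf t Ht) as (_&_&H&_). auto. Qed.
Lemma F_nn t x : (t < T)%nat -> 0 <= FF p t x.
Proof.
  intros Ht. rewrite <- (F_neg t (Rmin x (-1)) Ht) by (unfold Rmin; destruct Rle_dec; lra).
  apply F_mono; auto. apply Rmin_l.
Qed.
Lemma F_le1 t x : (t < T)%nat -> FF p t x <= 1.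
Proof.
  intros Ht. destruct (cdf t Ht) as (Hm&_&_&Hl).
  destruct (Rle_dec (FF p t x) 1) as [|Hn]; auto. exfalso.
  assert (He : 0 < FF p t x - 1) by lra.
  destruct (proj1 (filterlim_locally _ _) Hl (mkposreal _ He)) as [M HM].
  specialize (HM (Rmax M x + 1)). 
  assert (H1 : M < Rmax M x + 1) by (pose proof (Rmax_l M x); lra).
  specialize (HM H1). change (Rabs (FF p t (Rmax M x + 1) - 1) < FF p t x - 1) in HM.
  assert (FF p t x <= FF p t (Rmax M x + 1)) by (apply Hm; pose proof (Rmax_r M x); lra).
  apply Rabs_lt_between in HM. simpl in HM. lra.
Qed.


Lemma coer_p t M : (t < T)%nat -> exists N, forall x, N < x -> M < Ct p t x.
Proof.
  intros Ht. destruct Hp as (_&_&_&_&_&H&_). destruct (H t Ht) as (_&Hl&_).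
  apply is_lim_spec in Hl. exact (Hl M).
Qed.
Lemma coer_m t M : (t < T)%nat -> exists N, forall x, x < N -> M < Ct p t x.
Proof.
  intros Ht. destruct Hp as (_&_&_&_&_&H&_). destruct (H t Ht) as (_&_&Hl).
  apply is_lim_spec in Hl. exact (Hl M).
Qed.

Lemma SU_spec t : (t < T)%nat ->
  ongrid p (SU p t) /\ Cm p t <= SU p t.
Proof.
  intros Ht. pose proof th_pos as Hth.
  destruct (coer_p t (Ct p t (zn0 p t) + KK p t) Ht) as [N HN].
  destruct (grid_above p Hth (Rmax N (Cm p t))) as [m Hm].
  pose proof (Rmax_l N (Cm p t)). pose proof (Rmax_r N (Cm p t)).
  destruct (Rleast_grid p Hth (fun z => ongrid p z /\ Cm p t <= z /\ Ct p t z > Ct p t (zn0 p t) + KK p t) (zz p m) (Cm p t)) as [[H1 [H2 _]] _].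
  - intros x [Hx _]; auto.
  - split; [exists m; auto|]. split; [lra|]. apply HN. lra.
  - intros x (_&Hx&_); auto.
  - unfold SU. auto.
Qed.

Lemma sgrid_abs (t : nat) (b : R) (H : R -> R) : (t < T)%nat ->
  let I := Rgreatest (fun z => ongrid p z /\ z < Rmin b (Cm p t)) in
  let Ib := Rgreatest (fun z => ongrid p z /\ z <= I /\ Ct p t z > Ct p t I + KK p t) + th p in
  let S0 := Rgreatest (fun z => ongrid p z /\ I <= z <= SU p t /\
               forall w, ongrid p w -> I <= w <= SU p t -> H z <= H w) in
  ongrid p (if Req_EM_T (KK p t) 0 then S0
            else Rleast (fun z => ongrid p z /\ Ib <= z <= S0 /\ H z <= H S0 + KK p t)).
Proof.
  intros Ht I Ib S0. pose proof th_pos as Hth.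
  destruct (grid_below p Hth (Rmin b (Cm p t))) as [m0 Hm0].
  destruct (Rgreatest_grid p Hth (fun z => ongrid p z /\ z < Rmin b (Cm p t)) (zz p m0) (Rmin b (Cm p t)))
    as [[HIg HIlt] _].
  { intros x [Hx _]; auto. } { split; [exists m0; auto|auto]. } { intros x [_ Hx]; lra. }
  fold I in HIg, HIlt.
  assert (HICm : I < Cm p t) by (pose proof (Rmin_r b (Cm p t)); lra).
  destruct (SU_spec t Ht) as [HSUg HSU].
  destruct HIg as [a Ha]. destruct HSUg as [c Hc].
  assert (Hac : (a <= c)%Z) by (apply (zz_le_iff p Hth); rewrite <- Ha, <- Hc; lra).
  destruct (Zargmin (fun m => H (zz p m)) a c Hac) as [m [Hm Hmin]].
  destruct (Rgreatest_grid p Hth (fun z => ongrid p z /\ I <= z <= SU p t /\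
               forall w, ongrid p w -> I <= w <= SU p t -> H z <= H w) (zz p m) (SU p t))
    as [[HS0g [HS0r _]] _].
  { intros x [Hx _]; auto. }
  { split; [exists m; auto|]. split.
    - rewrite Ha, Hc. split; apply zz_le_iff; auto; lia.
    - intros w [k ->] Hw. apply Hmin. rewrite Ha, Hc in Hw. destruct Hw as [Hw1 Hw2].
      apply zz_le_iff in Hw1; auto. apply zz_le_iff in Hw2; auto. }
  { intros x (_&Hx&_); lra. }
  fold S0 in HS0g, HS0r.
  destruct (Req_EM_T (KK p t) 0); [exact HS0g|].
  destruct (coer_m t (Ct p t I + KK p t) Ht) as [N HN].
  destruct (grid_below p Hth (Rmin N I)) as [m1 Hm1].
  pose proof (Rmin_l N I). pose proof (Rmin_r N I).
  destruct (Rgreatest_grid p Hth (fun z => ongrid p z /\ z <= I /\ Ct p t z > Ct p t I + KK p t) (zz p m1) I)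
    as [[Hdg [HdI Hdc]] _].
  { intros x [Hx _]; auto. } { split; [exists m1; auto|]. split; [lra|]. apply HN. lra. }
  { intros x (_&Hx&_); auto. }
  pose proof (K_nn t Ht) as HK.
  assert (Hne : Rgreatest (fun z => ongrid p z /\ z <= I /\ Ct p t z > Ct p t I + KK p t) < I).
  { destruct HdI as [|He]; auto. rewrite He in Hdc. lra. }
  apply (grid_step p Hth) in Hne; [|exact Hdg|exists a; exact Ha].
  destruct (Rleast_grid p Hth (fun z => ongrid p z /\ Ib <= z <= S0 /\ H z <= H S0 + KK p t) S0 Ib)
    as [[Hr _] _].
  { intros x [Hx _]; auto. } { split; auto. unfold Ib. split; [split; lra| lra]. }
  { intros x (_&[Hx _]&_); auto. }
  exact Hr.
Qed.

Lemma s_grid t : (t <= T - 2)%nat -> ongrid p (s_ p t).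
Proof.
  intros Ht. pose proof T_ge2. unfold s_.
  destruct (hor p - 1 - t)%nat as [|k] eqn:Hk; [lia|].
  cbn [stg ss]. replace (hor p - 1 - S k)%nat with t by lia.
  exact (sgrid_abs t (sIb (stg p k) - th p) _ ltac:(lia)).
Qed.


Definition psiG bar t := fst (psiphi p bar (hor p - 1 - t)).
Definition phiG bar t := snd (psiphi p bar (hor p - 1 - t)).

Lemma psiG_unf bar t x y : (t <= T - 2)%nat ->
  psiG bar t x y = if Rlt_dec y (s_ p (S t) - th p) then gam p t * x
      else gam p t * x + alp p *
        sumR 0 (Z.to_nat (nidx p t y))
          (fun j => phiG bar (S t) x (y - zz p (Z.of_nat j - 1)) * fprob p t (Z.of_nat j - 1)).
Proof.
  intros Ht. pose proof T_ge2. unfold psiG, phiG.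
  replace (hor p - 1 - t)%nat with (S (hor p - 1 - S t)) by lia.
  cbn [psiphi fst]. replace (hor p - 1 - S (hor p - 1 - S t))%nat with t by lia.
  reflexivity.
Qed.

Lemma phiG_unf bar t x y : (t <= T - 2)%nat ->
  phiG bar t x y = if Rlt_dec y (s_ p t) then 0
                else if Rlt_dec (y - x) (s_ p t)
                     then psiG bar t (y - s_ p t + (if bar then th p else 0)) y
                     else psiG bar t x y.
Proof.
  intros Ht. pose proof T_ge2. unfold psiG, phiG.
  replace (hor p - 1 - t)%nat with (S (hor p - 1 - S t)) by lia.
  cbn [psiphi fst snd]. replace (hor p - 1 - S (hor p - 1 - S t))%nat with t by lia.
  reflexivity.
Qed.

Lemma psiG_last bar x y : psiG bar (T - 1) x y = gam p (T - 1) * x.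
Proof. unfold psiG. replace (hor p - 1 - (hor p - 1))%nat with 0%nat by lia. reflexivity. Qed.

Lemma phiG_last bar x y : phiG bar (T - 1) x y =
  if Rlt_dec y (s_ p (T - 1)) then 0 else gam p (T - 1) * x.
Proof. unfold phiG. replace (hor p - 1 - (hor p - 1))%nat with 0%nat by lia. reflexivity. Qed.

Definition cA t y := sumR 1 (hor p - 1 - t) (fun n => alp p ^ n * gam p (t + n) *
   prodR 0 (n - 1) (fun m => FF p (t + m) (y + INR (m + 1) * th p - s_ p (t + m + 1)))).
Definition cB t := sumR 1 (hor p - 1 - t) (fun n => alp p ^ n * gam p (t + n)).

Lemma cA_last t y : (T - 1 <= t)%nat -> cA t y = 0.
Proof. intros H. unfold cA. replace (hor p - 1 - t)%nat with 0%nat by lia. reflexivity. Qed.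
Lemma cB_last t : (T - 1 <= t)%nat -> cB t = 0.
Proof. intros H. unfold cB. replace (hor p - 1 - t)%nat with 0%nat by lia. reflexivity. Qed.

Lemma cA_rec t y : (t <= T - 2)%nat ->
  cA t y = alp p * FF p t (y + th p - s_ p (S t)) * (gam p (S t) + cA (S t) (y + th p)).
Proof.
  intros Ht. pose proof T_ge2. unfold cA.
  replace (hor p - 1 - t)%nat with (S (hor p - 1 - S t)) by lia.
  rewrite sumR_S1. rewrite prodR_00.
  replace (t + 0)%nat with t by lia. replace (t + 1)%nat with (S t) by lia.
  replace (t + 0 + 1)%nat with (S t) by lia.
  replace (INR (0 + 1)) with 1 by (simpl; ring).
  rewrite Rmult_plus_distr_l, <- sumR_scal. f_equal.
  - rewrite Rmult_1_l. ring.
  - apply sumR_ext. intros n Hn. destruct n as [|n']; [lia|].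
    replace (S (S n') - 1)%nat with (S n') by lia. rewrite prodR_S0.
    replace (S n' - 1)%nat with n' by lia.
    replace (t + 0)%nat with t by lia. replace (t + 0 + 1)%nat with (S t) by lia.
    replace (INR (0 + 1)) with 1 by (simpl; ring).
    replace (prodR 0 n' (fun i => FF p (t + S i) (y + INR (S i + 1) * th p - s_ p (t + S i + 1))))
      with (prodR 0 n' (fun m => FF p (S t + m) (y + th p + INR (m + 1) * th p - s_ p (S t + m + 1)))).
    + replace (t + S (S n'))%nat with (S t + S n')%nat by lia. simpl pow. rewrite Rmult_1_l. replace (t + 1)%nat with (S t) by lia. ring.
    + apply prodR_ext. intros m. replace (t + S m)%nat with (S t + m)%nat by lia.
      f_equal. rewrite !plus_INR, !S_INR. simpl INR. ring.
Qed.

Lemma cB_rec t : (t <= T - 2)%nat -> cB t = alp p * (gam p (S t) + cB (S t)).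
Proof.
  intros Ht. pose proof T_ge2. unfold cB.
  replace (hor p - 1 - t)%nat with (S (hor p - 1 - S t)) by lia.
  rewrite sumR_S1. rewrite Rmult_plus_distr_l, <- sumR_scal. f_equal.
  - replace (t + 1)%nat with (S t) by lia. simpl. ring.
  - apply sumR_ext. intros n Hn. replace (t + S n)%nat with (S t + n)%nat by lia. simpl. ring.
Qed.


Lemma cA_props_low t : (t <= T - 1)%nat ->
  (forall y, 0 <= cA t y) /\ (forall y y', y <= y' -> cA t y <= cA t y') /\ (forall y, cA t y <= cB t).
Proof.
  revert t. pose proof T_ge2. pose proof alp_pos.
  apply (back_ind (fun t => (forall y, 0 <= cA t y) /\ (forall y y', y <= y' -> cA t y <= cA t y') /\ (forall y, cA t y <= cB t))).
  - rewrite cB_last by lia. split; [|split]; intros; rewrite ?cA_last by lia; lra.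
  - intros t Ht [IH1 [IH2 IH3]].
    assert (Hg : 0 <= gam p (S t)) by (apply gam_nn; lia).
    split; [|split].
    + intros y. rewrite cA_rec by lia. specialize (IH1 (y + th p)).
      pose proof (F_nn t (y + th p - s_ p (S t)) ltac:(lia)).
      apply Rmult_le_pos; [apply Rmult_le_pos|]; lra.
    + intros y y' Hy. rewrite (cA_rec t y), (cA_rec t y') by lia.
      pose proof (F_nn t (y + th p - s_ p (S t)) ltac:(lia)).
      pose proof (F_mono t (y + th p - s_ p (S t)) (y' + th p - s_ p (S t)) ltac:(lia) ltac:(lra)).
      specialize (IH2 (y + th p) (y' + th p) ltac:(lra)). specialize (IH1 (y + th p)).
      apply Rmult_le_compat; [| lra | | lra].
      * apply Rmult_le_pos; lra.
      * apply Rmult_le_compat_l; lra.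
    + intros y. rewrite cA_rec, cB_rec by lia.
      pose proof (F_nn t (y + th p - s_ p (S t)) ltac:(lia)).
      pose proof (F_le1 t (y + th p - s_ p (S t)) ltac:(lia)).
      specialize (IH3 (y + th p)). specialize (IH1 (y + th p)).
      rewrite Rmult_assoc. apply Rmult_le_compat_l; [lra|].
      replace (gam p (S t) + cB (S t)) with (1 * (gam p (S t) + cB (S t))) by ring.
      apply Rmult_le_compat; lra.
Qed.

Lemma cA_nn t y : 0 <= cA t y.
Proof. destruct (le_lt_dec t (T - 1)). apply cA_props_low; auto. rewrite cA_last by lia. lra. Qed.
Lemma cA_mono t y y' : y <= y' -> cA t y <= cA t y'.
Proof. destruct (le_lt_dec t (T - 1)). apply cA_props_low; auto. rewrite !cA_last by lia. lra. Qed.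
Lemma cA_le_cB t y : cA t y <= cB t.
Proof. destruct (le_lt_dec t (T - 1)). apply cA_props_low; auto. rewrite cA_last, cB_last by lia. lra. Qed.

Lemma grid_sub a b : ongrid p a -> ongrid p b -> ongrid p (a - b).
Proof. intros [m ->] [n ->]. exists (m - n)%Z. unfold zz. rewrite minus_IZR. ring. Qed.
Lemma grid_add a b : ongrid p a -> ongrid p b -> ongrid p (a + b).
Proof. intros [m ->] [n ->]. exists (m + n)%Z. unfold zz. rewrite plus_IZR. ring. Qed.
Lemma grid_th : ongrid p (th p).
Proof. exists 1%Z. unfold zz. simpl. ring. Qed.
Lemma grid_zz m : ongrid p (zz p m).
Proof. exists m. auto. Qed.

Lemma tele_sumR (h : Z -> R) W M (a : nat -> R) :
  (forall j, a j <= W * (h (Z.of_nat j) - h (Z.of_nat j - 1)%Z)) ->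
  sumR 0 M a <= W * (h (Z.of_nat M) - h (-1)%Z).
Proof.
  intros Ha. induction M.
  - rewrite sumR_00. apply Ha.
  - rewrite sumR_back. specialize (Ha (S M)).
    replace (Z.of_nat (S M) - 1)%Z with (Z.of_nat M) in Ha by lia. lra.
Qed.

Lemma fprob_eq t j : fprob p t (Z.of_nat j - 1) =
  FF p t (zz p (Z.of_nat j)) - FF p t (zz p (Z.of_nat j - 1)).
Proof. unfold fprob. rewrite Z.sub_add. reflexivity. Qed.

Lemma fprob_nn t j : (t < T)%nat -> 0 <= fprob p t (Z.of_nat j - 1).
Proof.
  intros Ht. rewrite fprob_eq. pose proof th_pos.
  assert (zz p (Z.of_nat j - 1) <= zz p (Z.of_nat j)) by (apply zz_le_iff; auto; lia).
  pose proof (F_mono t _ _ Ht H0). lra.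
Qed.

Lemma F_zzm1 t : (t < T)%nat -> FF p t (zz p (-1)) = 0.
Proof. intros Ht. apply F_neg; auto. unfold zz. pose proof th_pos. simpl. lra. Qed.

Lemma zz_m1_le j y : y - zz p (Z.of_nat j - 1) <= y + th p.
Proof.
  pose proof th_pos. assert (zz p (-1) <= zz p (Z.of_nat j - 1)) by (apply zz_le_iff; auto; lia).
  unfold zz in *. simpl in H0. lra.
Qed.

Lemma nidx_bound t y : s_ p (S t) - th p <= y ->
  zz p (Z.of_nat (Z.to_nat (nidx p t y))) <= y + th p - s_ p (S t).
Proof.
  intros Hy. pose proof th_pos. unfold nidx.
  set (q := (y - s_ p (S t)) / th p).
  destruct (Z_lt_le_dec (Int_part q + 1) 0).
  - replace (Z.to_nat (Int_part q + 1)) with 0%nat by lia. unfold zz. simpl. lra.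
  - rewrite Z2Nat.id by lia. unfold zz. rewrite plus_IZR. destruct (base_Int_part q) as [H1 _].
    assert (q * th p = y - s_ p (S t)) by (unfold q; field; lra).
    apply Rle_trans with ((q + 1) * th p); [apply Rmult_le_compat_r; simpl; lra| lra].
Qed.

Lemma phi_bound bar t : (t <= T - 1)%nat ->
  (forall x y, 0 <= x -> (bar = true -> ongrid p x /\ ongrid p y) ->
     psiG bar t x y <= x * (gam p t + cA t y)) ->
  forall x y, 0 <= x -> (bar = true -> ongrid p x /\ ongrid p y) ->
     phiG bar t x y <= x * (gam p t + cA t y).
Proof.
  intros Ht Hpsi x y Hx Hb. pose proof th_pos.
  assert (Hc : 0 <= gam p t + cA t y) by (pose proof (gam_nn t ltac:(pose proof T_ge2; lia)); pose proof (cA_nn t y); lra).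
  destruct (Nat.eq_dec t (T - 1)) as [->|Hne].
  - rewrite phiG_last. destruct Rlt_dec. apply Rmult_le_pos; lra.
    rewrite cA_last by lia. lra.
  - rewrite phiG_unf by lia. destruct Rlt_dec as [|Hys]. apply Rmult_le_pos; lra.
    destruct Rlt_dec as [Hyx|]; [|apply Hpsi; auto].
    destruct bar.
    + destruct (Hb eq_refl) as [Hgx Hgy].
      assert (Hs : ongrid p (s_ p t)) by (apply s_grid; lia).
      assert (Hst := grid_step p H _ _ (grid_sub _ _ Hgy Hgx) Hs Hyx).
      eapply Rle_trans; [apply Hpsi|].
      * lra.
      * intros _. split; auto. apply grid_add; [apply grid_sub|apply grid_th]; auto.
      * apply Rmult_le_compat_r; lra.
    + eapply Rle_trans; [apply Hpsi|].
      * lra.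
      * discriminate.
      * apply Rmult_le_compat_r; lra.
Qed.

Lemma psi_bound bar t : (t <= T - 1)%nat ->
  forall x y, 0 <= x -> (bar = true -> ongrid p x /\ ongrid p y) ->
     psiG bar t x y <= x * (gam p t + cA t y).
Proof.
  revert t. pose proof T_ge2. pose proof alp_pos. pose proof th_pos.
  apply (back_ind (fun t => forall x y, 0 <= x -> (bar = true -> ongrid p x /\ ongrid p y) ->
     psiG bar t x y <= x * (gam p t + cA t y))).
  - intros x y Hx _. rewrite psiG_last, cA_last by lia. lra.
  - intros t Ht IH x y Hx Hb.
    pose proof (phi_bound bar (S t) ltac:(lia) IH) as Hphi.
    assert (Hg : 0 <= gam p (S t)) by (apply gam_nn; lia).
    assert (Hgt : 0 <= gam p t) by (apply gam_nn; lia).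
    rewrite psiG_unf by lia. destruct Rlt_dec.
    + pose proof (cA_nn t y). assert (0 <= x * cA t y) by (apply Rmult_le_pos; lra). lra.
    + set (W := x * (gam p (S t) + cA (S t) (y + th p))).
      assert (HW : 0 <= W) by (unfold W; pose proof (cA_nn (S t) (y + th p)); apply Rmult_le_pos; lra).
      assert (Hs : sumR 0 (Z.to_nat (nidx p t y))
          (fun j => phiG bar (S t) x (y - zz p (Z.of_nat j - 1)) * fprob p t (Z.of_nat j - 1))
          <= W * (FF p t (zz p (Z.of_nat (Z.to_nat (nidx p t y)))) - FF p t (zz p (-1)))).
      { apply (tele_sumR (fun m => FF p t (zz p m))). intros j.
        rewrite <- fprob_eq. apply Rmult_le_compat_r; [apply fprob_nn; lia|].
        eapply Rle_trans; [apply Hphi|]; auto.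
        - intros Hbar. destruct (Hb Hbar). split; auto. apply grid_sub; auto. apply grid_zz.
        - unfold W. apply Rmult_le_compat_l; auto.
          pose proof (cA_mono (S t) _ _ (zz_m1_le j y)). lra. }
      rewrite F_zzm1 in Hs by lia.
      pose proof (nidx_bound t y ltac:(lra)) as Hn.
      pose proof (F_mono t _ _ ltac:(lia) Hn).
      rewrite (cA_rec t y) by lia.
      assert (W * (FF p t (zz p (Z.of_nat (Z.to_nat (nidx p t y)))) - 0) <= W * FF p t (y + th p - s_ p (S t)))
        by (apply Rmult_le_compat_l; lra).
      unfold W in *. 
      apply Rle_trans with (gam p t * x + alp p * (x * (gam p (S t) + cA (S t) (y + th p)) * FF p t (y + th p - s_ p (S t)))).
      * apply Rplus_le_compat_l. apply Rmult_le_compat_l; lra.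
      * right. ring.
Qed.


Lemma Esum_bound t g W : (t < T)%nat -> 0 <= W ->
  (forall j, g (zz p (Z.of_nat j - 1)) <= W) -> Esum p t g <= W.
Proof.
  intros Ht HW Hg. unfold Esum, Series.
  set (a := fun j : nat => g (zz p (Z.of_nat j - 1)) * fprob p t (Z.of_nat j - 1)).
  assert (Ha : forall j, a j <= W * fprob p t (Z.of_nat j - 1)).
  { intros j. unfold a. apply Rmult_le_compat_r; auto. apply fprob_nn; auto. }
  assert (Hs : forall n, sum_n a n <= W * FF p t (zz p (Z.of_nat n))).
  { induction n.
    - rewrite sum_O. eapply Rle_trans; [apply Ha|]. rewrite fprob_eq, F_zzm1 by auto.
      simpl. lra.
    - rewrite sum_Sn. change (plus (sum_n a n) (a (S n))) with (sum_n a n + a (S n)).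
      specialize (Ha (S n)). rewrite fprob_eq in Ha.
      replace (Z.of_nat (S n) - 1)%Z with (Z.of_nat n) in Ha by lia. lra. }
  assert (Hs' : forall n, sum_n a n <= W).
  { intros n. eapply Rle_trans; [apply Hs|].
    pose proof (F_le1 t (zz p (Z.of_nat n)) Ht).
    replace W with (W * 1) at 2 by ring. apply Rmult_le_compat_l; auto. }
  assert (Hl : Rbar_le (Lim_seq (sum_n a)) (Lim_seq (fun _ => W))).
  { apply Lim_seq_le_loc. exists 0%nat. intros n _. auto. }
  rewrite Lim_seq_const in Hl.
  destruct (Lim_seq (sum_n a)); simpl in *; auto; lra.
Qed.

Lemma omk_unf t : (t <= T - 2)%nat ->
  omegaF p t = (fun x => psiG false t (th p) x - gam p t * th p
                      + alp p * Esum p t (fun z => omegabar p (S t) (x - z))) /\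
  etaF p t = psiG true t (th p) (SU p t) + omegaF p t (SU p t) /\
  omegabar p t = (fun x => if Rle_dec x (SU p t) then etaF p t else Rmax (etaF p t) (omegaF p t x)).
Proof.
  intros Ht. pose proof T_ge2. unfold omegaF, etaF, omegabar.
  assert (E : (hor p - 1 - t = S (hor p - 1 - S t))%nat) by lia. rewrite E.
  cbn [omk fst snd]. replace (hor p - 1 - S (hor p - 1 - S t))%nat with t by lia.
  unfold psiG, psiF, psibF.
  split; [reflexivity|split;reflexivity].
Qed.

Lemma omegabar_last x : omegabar p (T - 1) x = 0.
Proof. unfold omegabar. replace (hor p - 1 - (hor p - 1))%nat with 0%nat by lia. reflexivity. Qed.

Definition GG' t w := gam p t + cA t (SU p t) + cA t (Rmax w (SU p t)).

Lemma Rmax_mono a b c : a <= b -> Rmax a c <= Rmax b c.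
Proof. unfold Rmax. repeat destruct Rle_dec; lra. Qed.

Lemma omega_step t Wn : (t <= T - 2)%nat ->
  (forall x, omegabar p (S t) x <= Wn x) -> (forall x y, x <= y -> Wn x <= Wn y) ->
  (forall x, 0 <= Wn x) ->
  forall z, omegabar p t z <= th p * GG' t z + alp p * Wn (Rmax z (SU p t) + th p).
Proof.
  intros Ht Hb Hm Hn z. pose proof th_pos. pose proof alp_pos. pose proof T_ge2.
  destruct (omk_unf t Ht) as (Ho & He & Hob).
  assert (Hg : 0 <= gam p t) by (apply gam_nn; lia).
  assert (Hw : forall x, omegaF p t x <= th p * cA t x + alp p * Wn (x + th p)).
  { intros x. rewrite Ho.
    pose proof (psi_bound false t ltac:(lia) (th p) x ltac:(lra) ltac:(discriminate)).
    assert (Esum p t (fun z0 => omegabar p (S t) (x - z0)) <= Wn (x + th p)).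
    { apply Esum_bound; auto; [lia|]. intros j. eapply Rle_trans; [apply Hb|].
      apply Hm. apply zz_m1_le. }
    apply Rmult_le_compat_l with (r := alp p) in H3; lra. }
  assert (Heta : etaF p t <= th p * (gam p t + cA t (SU p t)) + th p * cA t (SU p t) + alp p * Wn (SU p t + th p)).
  { rewrite He. destruct (SU_spec t ltac:(lia)) as [HSU _].
    pose proof (psi_bound true t ltac:(lia) (th p) (SU p t) ltac:(lra) (fun _ => conj grid_th HSU)).
    specialize (Hw (SU p t)). lra. }
  rewrite Hob. unfold GG'. destruct Rle_dec as [Hz|Hz].
  - rewrite Rmax_right by auto. lra.
  - rewrite (Rmax_left z (SU p t)) by lra.
    pose proof (cA_mono t (SU p t) z ltac:(lra)) as Q1.
    pose proof (Hm (SU p t + th p) (z + th p) ltac:(lra)) as Q2.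
    pose proof (cA_nn t (SU p t)) as Q3.
    apply Rmax_lub.
    + apply Rmult_le_compat_l with (r := th p) in Q1; [|lra].
      apply Rmult_le_compat_l with (r := alp p) in Q2; [|lra]. lra.
    + specialize (Hw z). assert (0 <= th p * (gam p t + cA t (SU p t))) by (apply Rmult_le_pos; lra). lra.
Qed.


Lemma mu_shift t z i : mu p t z (S i) = mu p (S t) (Rmax z (SU p t) + th p) i.
Proof.
  induction i.
  - simpl. rewrite Nat.add_0_r. reflexivity.
  - change (mu p t z (S (S i))) with (Rmax (mu p t z (S i)) (SU p (t + S i)) + th p).
    rewrite IHi. simpl. replace (t + S i)%nat with (S (t + i)) by lia. reflexivity.
Qed.

Lemma mu_mono t z z' i : z <= z' -> mu p t z i <= mu p t z' i.
Proof.
  intros H. induction i; simpl; auto.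
  apply Rplus_le_compat_r. unfold Rmax. repeat destruct Rle_dec; lra.
Qed.

Lemma Uom_sum t z : Uomega p t z =
  th p * sumR 0 (T - 2 - t) (fun i => alp p ^ i * GG' (t + i) (mu p t z i)).
Proof.
  unfold Uomega. rewrite <- Rmult_plus_distr_l, <- sumR_plus. f_equal.
  apply sumR_ext. intros i _. unfold GG'.
  replace (hor p - 1 - t - i)%nat with (hor p - 1 - (t + i))%nat by lia.
  unfold cA. rewrite Rmult_plus_distr_l, Rmult_plus_distr_l, Rplus_assoc. f_equal.
  rewrite <- !sumR_scal, <- sumR_plus. apply sumR_ext. intros n _.
  rewrite pow_add. ring.
Qed.

Lemma Ubar_sum t : Ubar p t =
  th p * sumR 0 (T - 2 - t) (fun i => alp p ^ i * (gam p (t + i) + 2 * cB (t + i))).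
Proof.
  unfold Ubar.
  replace (sumR 0 (T - 2 - t) (fun i => alp p ^ i * (gam p (t + i) + 2 * cB (t + i))))
    with (sumR 0 (T - 2 - t) (fun i => alp p ^ i * gam p (t + i)) + 2 * sumR 0 (T - 2 - t) (fun i => alp p ^ i * cB (t + i)))
    by (rewrite <- sumR_scal, <- sumR_plus; apply sumR_ext; intros; ring).
  replace (sumR 0 (T - 2 - t) (fun i => sumR 1 (T - 1 - t - i) (fun n => alp p ^ (n + i) * gam p (t + i + n))))
    with (sumR 0 (T - 2 - t) (fun i => alp p ^ i * cB (t + i))).
  - ring.
  - apply sumR_ext. intros i _. unfold cB.
    replace (hor p - 1 - t - i)%nat with (hor p - 1 - (t + i))%nat by lia.
    rewrite <- sumR_scal. apply sumR_ext. intros n _. rewrite pow_add. ring.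
Qed.

Lemma Uom_last t z : t = (T - 2)%nat -> Uomega p t z = th p * GG' t z.
Proof.
  intros ->. rewrite Uom_sum. replace (T - 2 - (T - 2))%nat with 0%nat by lia.
  rewrite sumR_00. simpl. rewrite Nat.add_0_r. ring.
Qed.

Lemma Uom_rec t z : (t < T - 2)%nat ->
  Uomega p t z = th p * GG' t z + alp p * Uomega p (S t) (Rmax z (SU p t) + th p).
Proof.
  intros Ht. rewrite !Uom_sum. replace (T - 2 - t)%nat with (S (T - 2 - S t)) by lia.
  rewrite sumR_S0, Rmult_plus_distr_l. f_equal.
  - simpl. rewrite Nat.add_0_r. ring.
  - rewrite <- !sumR_scal. apply sumR_ext. intros i _.
    rewrite mu_shift. replace (t + S i)%nat with (S t + i)%nat by lia. simpl. ring.
Qed.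

Lemma Ubar_last t : t = (T - 2)%nat -> Ubar p t = th p * (gam p t + 2 * cB t).
Proof.
  intros ->. rewrite Ubar_sum. replace (T - 2 - (T - 2))%nat with 0%nat by lia.
  rewrite sumR_00. simpl. rewrite Nat.add_0_r. ring.
Qed.

Lemma Ubar_rec t : (t < T - 2)%nat ->
  Ubar p t = th p * (gam p t + 2 * cB t) + alp p * Ubar p (S t).
Proof.
  intros Ht. rewrite !Ubar_sum. replace (T - 2 - t)%nat with (S (T - 2 - S t)) by lia.
  rewrite sumR_S0, Rmult_plus_distr_l. f_equal.
  - simpl. rewrite Nat.add_0_r. ring.
  - rewrite <- !sumR_scal. apply sumR_ext. intros i _.
    replace (t + S i)%nat with (S t + i)%nat by lia. simpl. ring.
Qed.

Lemma GG_props t : (t <= T - 2)%nat ->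
  (forall w, 0 <= GG' t w) /\ (forall w w', w <= w' -> GG' t w <= GG' t w') /\
  (forall w, GG' t w <= gam p t + 2 * cB t).
Proof.
  intros Ht. pose proof T_ge2. assert (Hg : 0 <= gam p t) by (apply gam_nn; lia).
  unfold GG'. split; [|split].
  - intros w. pose proof (cA_nn t (SU p t)). pose proof (cA_nn t (Rmax w (SU p t))). lra.
  - intros w w' H1. pose proof (cA_mono t _ _ (Rmax_mono w w' (SU p t) H1)). lra.
  - intros w. pose proof (cA_le_cB t (SU p t)). pose proof (cA_le_cB t (Rmax w (SU p t))). lra.
Qed.

Lemma main_ind t : (t <= T - 2)%nat ->
  (forall z, omegabar p t z <= Uomega p t z) /\ (forall z, 0 <= Uomega p t z) /\
  (forall z z', z <= z' -> Uomega p t z <= Uomega p t z') /\ (forall z, Uomega p t z <= Ubar p t).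
Proof.
  revert t. pose proof T_ge2. pose proof th_pos. pose proof alp_pos. pose proof alp_le1.
  apply (back_ind (fun t => (forall z, omegabar p t z <= Uomega p t z) /\ (forall z, 0 <= Uomega p t z) /\
    (forall z z', z <= z' -> Uomega p t z <= Uomega p t z') /\ (forall z, Uomega p t z <= Ubar p t))).
  - destruct (GG_props (T - 2) ltac:(lia)) as (G1 & G2 & G3).
    split; [|split; [|split]].
    + intros z. rewrite Uom_last by auto.
      pose proof (omega_step (T - 2) (fun _ => 0) ltac:(lia)) as Hs.
      replace (S (T - 2)) with (T - 1)%nat in Hs by lia.
      specialize (Hs (fun x => ltac:(rewrite omegabar_last; lra)) (fun _ _ _ => Rle_refl 0) (fun _ => Rle_refl 0) z).
      lra.
    + intros z. rewrite Uom_last by auto. apply Rmult_le_pos; [lra|auto].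
    + intros z z' Hz. rewrite !Uom_last by auto. apply Rmult_le_compat_l; [lra|auto].
    + intros z. rewrite Uom_last, Ubar_last by auto. apply Rmult_le_compat_l; [lra|auto].
  - intros t Ht (I1 & I2 & I3 & I4).
    destruct (GG_props t ltac:(lia)) as (G1 & G2 & G3).
    split; [|split; [|split]].
    + intros z. rewrite Uom_rec by auto. apply omega_step; auto. lia.
    + intros z. rewrite Uom_rec by auto. specialize (I2 (Rmax z (SU p t) + th p)).
      specialize (G1 z). assert (0 <= th p * GG' t z) by (apply Rmult_le_pos; lra).
      assert (0 <= alp p * Uomega p (S t) (Rmax z (SU p t) + th p)) by (apply Rmult_le_pos; lra). lra.
    + intros z z' Hz. rewrite (Uom_rec t z), (Uom_rec t z') by auto.
      apply Rplus_le_compat; apply Rmult_le_compat_l; try lra.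
      * apply G2; auto.
      * apply I3. pose proof (Rmax_mono z z' (SU p t) Hz). lra.
    + intros z. rewrite Uom_rec, Ubar_rec by auto.
      apply Rplus_le_compat; apply Rmult_le_compat_l; try lra; auto.
Qed.

End Model.

Theorem theorem4p3 (p : model) (Hp : standing p) (j : Z) (t : nat)
  (Ht : (t <= hor p - 2)%nat) :
  omegabar p t (zz p j) <= Uomega p t (zz p j) <= Ubar p t.
Proof.
  destruct (main_ind p Hp t Ht) as (H1 & _ & _ & H4). split; auto.
Qed.
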